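(* Let $n, k \in \mathbb{N}$, $m \in \mathbb{Z}$ with $0 \le m \le n-1$, and let $F \colon \mathcal{K}_k^n \to \mathbb{Z}^{n-1}$ be such that $\|F(K') - F(K)\|_\infty \le 1$ for all $K, K' \in \mathcal{K}_k^n$ with $\dim(K \cap K') \ge m$. Then $\|F(K') - F(K)\|_\infty \le m+1$ for all $K, K' \in \mathcal{K}_k^n$ with $K \cap K' \ne \emptyset$.
   Context: $\mathcal{K}_k^n = \{\prod_{s=1}^n [\frac{i_s-1}{k}, \frac{i_s}{k}] : i_s \in \{1,\dots,k\}\}$ is the division of $[0,1]^n$ into $k^n$ closed cubes; $\dim$ is topological dimension (the dimension of the common face of two cubes); $\mathbb{Z}^0=\{0\}$. *)

(* Defs.v *)
From mathcomp Require Import all_boot all_order all_algebra.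
From mathcomp Require Import reals.
Set Implicit Arguments. Unset Strict Implicit. Unset Printing Implicit Defensive.
Import Order.TTheory GRing.Theory Num.Theory.
Local Open Scope ring_scope.

(* A cube of K_k^n is indexed by i : 'I_n -> 'I_k (0-based: the paper's
   i_s in {1..k} corresponds to (i s).+1).  Its point set in R^n is
   prod_s [ i_s / k , (i_s + 1) / k ]. *)
Definition cube_index (n k : nat) := {ffun 'I_n -> 'I_k}.

Definition cube {R : realType} (n k : nat) (i : cube_index n k)
  : ('I_n -> R) -> Prop :=
  fun x => forall s : 'I_n,
    (i s)%:R / k%:R <= x s /\ x s <= (i s).+1%:R / k%:R.

Definition cube_inter {R : realType} (n k : nat) (K K' : cube_index n k)
  : ('I_n -> R) -> Prop := fun x => cube K x /\ cube K' x.

Definition nonempty_set {R : realType} (n : nat) (A : ('I_n -> R) -> Prop) :=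
  exists x, A x.

(* dim A >= m, for A a (possibly empty) box prod_s [a_s, b_s] (such as the
   intersection of two cubes): A is nonempty (dim of the empty set is -1)
   and at least m coordinates s have a non-degenerate factor, i.e. two
   points of A differ in coordinate s.  For a box this is exactly its
   topological dimension (the number of non-degenerate factors). *)
Definition box_dim_ge {R : realType} (n : nat) (A : ('I_n -> R) -> Prop)
  (m : nat) : Prop :=
  nonempty_set A /\
  exists S : {set 'I_n}, (m <= #|S|)%N /\
    forall s, s \in S -> exists x y, A x /\ A y /\ x s <> y s.

Definition supdist (p : nat) (u v : 'I_p -> int) : nat :=
  (\max_(j < p) `|v j - u j|%N)%N.

(* Main.v *)
Require Import Defs.
From mathcomp Require Import all_boot all_order all_algebra.
From mathcomp Require Import reals.
From mathcomp Require Import zify.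
Set Implicit Arguments. Unset Strict Implicit. Unset Printing Implicit Defensive.
Import Order.TTheory GRing.Theory Num.Theory.

Lemma supdist_tri p (u v w : 'I_p -> int) :
  (supdist u w <= supdist u v + supdist v w)%N.
Proof.
apply/bigmax_leqP => j _.
apply: leq_trans (leq_add (@leq_bigmax _ (fun i => `|(v i - u i)%R|%N) j)
                         (@leq_bigmax _ (fun i => `|(w i - v i)%R|%N) j)).
rewrite addnC; exact: leqD_dist.
Qed.

Local Open Scope ring_scope.
Lemma near_of_inter (R : realType) n k (K K' : cube_index n k) :
  nonempty_set (cube_inter (R:=R) K K') ->
  forall s, (K s <= (K' s).+1)%N /\ (K' s <= (K s).+1)%N.
Proof.
case=> x [HK HK'] s; have [a1 a2] := HK s; have [b1 b2] := HK' s.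
have kpos : (0 < k)%N := leq_ltn_trans (leq0n _) (ltn_ord (K s)).
have kR : 0 < k%:R^-1 :> R by rewrite invr_gt0 ltr0n.
split; rewrite -(ler_nat R) -(ler_pM2r kR).
- exact: le_trans a1 b2.
- exact: le_trans b1 a2.
Qed.

Lemma dim_of_near (R : realType) n k m (K K' : cube_index n k) :
  (forall s, (K s <= (K' s).+1)%N /\ (K' s <= (K s).+1)%N) ->
  (m <= #|[set s | K s == K' s]|)%N ->
  box_dim_ge (cube_inter (R:=R) K K') m.
Proof.
move=> near hm.
pose pt (b : nat) : 'I_n -> R := fun s =>
  (if K s == K' s then (K s + b)%N else maxn (K s) (K' s))%:R / k%:R.
have kR : 0 <= k%:R^-1 :> R by rewrite invr_ge0 ler0n.
have mem : forall b, (b <= 1)%N -> cube_inter K K' (pt b).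
  move=> b hb; split=> s; rewrite /pt; have [h1 h2] := near s;
    split; apply: ler_wpM2r => //; rewrite ler_nat;
    case: eqP => [e|ne]; try rewrite -e; lia.
split; first by exists (pt 0%N); apply: mem.
exists [set s | K s == K' s]; split => // s; rewrite inE => /eqP e.
exists (pt 0%N), (pt 1%N); split; first exact: mem.
split; first exact: mem.
have kpos : (0 < k)%N := leq_ltn_trans (leq0n _) (ltn_ord (K s)).
rewrite /pt e eqxx => H.
have := congr1 (fun z => z * k%:R) H; rewrite !divfK ?pnatr_eq0 -?lt0n //.
by move/eqP; rewrite eqr_nat; lia.
Qed.

Lemma card_interval n a c :
  (#|[set s : 'I_n | (a <= s < a + c)%N]| <= c)%N.
Proof.
rewrite cardE -(size_map val) -(size_iota a c).
apply: uniq_leq_size.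
  by rewrite (map_inj_uniq val_inj) enum_uniq.
move=> x /mapP [s]; rewrite mem_enum inE => hs ->.
by rewrite mem_iota; rewrite size_iota in hs.
Qed.

Theorem mainTheorem6 (R : realType) (n k m : nat) (Hm : (m < n)%N)
  (F : cube_index n k -> ('I_n.-1 -> int))
  (HF : forall K K' : cube_index n k,
      box_dim_ge (cube_inter (R:=R) K K') m ->
      (supdist (F K) (F K') <= 1)%N) :
  forall K K' : cube_index n k,
    nonempty_set (cube_inter (R:=R) K K') ->
    (supdist (F K) (F K') <= m.+1)%N.
Proof.
move=> K K' HKK'.
have near := near_of_inter HKK'.
set c := (n - m)%N.
have cover : (n <= m.+1 * c)%N by rewrite /c; nia.
pose P (j : nat) : cube_index n k :=
  [ffun s : 'I_n => if (s < j * c)%N then K' s else K s].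
have P0 : P 0%N = K by apply/ffunP => s; rewrite ffunE.
have Pm : P m.+1 = K'.
  by apply/ffunP => s; rewrite ffunE (leq_trans (ltn_ord s) cover).
have step : forall j, (supdist (F (P j)) (F (P j.+1)) <= 1)%N.
  move=> j; apply: HF; apply: dim_of_near.
    move=> s; rewrite !ffunE; have [h1 h2] := near s.
    by case: ifP; case: ifP => _ _; lia.
  have sub : ~: [set s : 'I_n | (j * c <= s < j * c + c)%N]
               \subset [set s | P j s == P j.+1 s].
    apply/subsetP => s; rewrite !inE !ffunE mulSn => h.
    by case: ifP => h1; case: ifP => h2 //; exfalso; lia.
  apply: leq_trans (subset_leq_card sub).
  have := cardsC [set s : 'I_n | (j * c <= s < j * c + c)%N].
  rewrite card_ord.
  have := card_interval n (j * c) c.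
  rewrite /c; lia.
have chain : forall j, (supdist (F K) (F (P j)) <= j)%N.
  elim=> [|j IH].
    rewrite P0; apply/bigmax_leqP => i _; by rewrite subrr.
  apply: leq_trans (supdist_tri _ (F (P j)) _) _.
  by apply: leq_trans (leq_add IH (step j)) _; rewrite addn1.
by rewrite -Pm chain.
Qed.
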